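(* Let $G$ be a graph with $m$ vertices. Then the modular sumset number of $G$ is $\sigma(G)=1+\lfloor \log_2 m\rfloor$.
   Context: Graphs are simple and finite, without isolated vertices. For a positive integer $n$, $\mathbb{Z}_n$ denotes the set of non-negative integers modulo $n$ and $\mathscr{P}(\mathbb{Z}_n)$ its power set; for $A,B\subseteq\mathbb{Z}_n$, $A+B=\{x\in\mathbb{Z}_n: x\equiv a+b \pmod n,\ a\in A,\ b\in B\}$. A modular sumset labeling of $G$ is an injective function $f:V(G)\to\mathscr{P}(\mathbb{Z}_n)$ assigning non-empty subsets of $\mathbb{Z}_n$ to the vertices, with induced edge function $f^+(uv)=f(u)+f(v)$. The modular sumset number $\sigma(G)$ is the smallest positive integer $n$ such that $G$ admits a modular sumset labeling $f:V(G)\to\mathscr{P}(\mathbb{Z}_n)$. *)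

(* Defs.v *)
From mathcomp Require Import all_boot.
Set Implicit Arguments. Unset Strict Implicit. Unset Printing Implicit Defensive.

Definition simple_graph (T : finType) (e : rel T) : Prop :=
  symmetric e /\ irreflexive e.

Definition no_isolated_vertices (T : finType) (e : rel T) : Prop :=
  forall x : T, exists y : T, e x y.

(* Z_n is represented by 'I_n (the residues 0..n-1); subsets by {set 'I_n}. *)
Definition modsumset (n : nat) (A B : {set 'I_n}) : {set 'I_n} :=
  [set x : 'I_n | [exists a in A, exists b in B, (x : nat) == (a + b) %% n]].

Definition induced_edge_fun (T : finType) (n : nat) (f : T -> {set 'I_n})
  (u v : T) : {set 'I_n} := modsumset (f u) (f v).

Definition modular_sumset_labeling (T : finType) (e : rel T) (n : nat)
  (f : T -> {set 'I_n}) : Prop :=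
  injective f /\ (forall x : T, f x != set0).

Definition admits_modular_sumset_labeling (T : finType) (e : rel T) (n : nat)
  : Prop := exists f : T -> {set 'I_n}, modular_sumset_labeling e f.

Definition is_modular_sumset_number (T : finType) (e : rel T) (s : nat) : Prop :=
  0 < s /\ admits_modular_sumset_labeling e s /\
  (forall n : nat, 0 < n -> admits_modular_sumset_labeling e n -> s <= n).

(* Main.v *)
Require Import Defs.
From mathcomp Require Import all_boot.

Lemma card_nonempty (n : nat) :
  #|[set~ (set0 : {set 'I_n})]| = (2 ^ n).-1.
Proof. by rewrite cardsC1 -cardsT -powersetT card_powerset cardsT card_ord. Qed.

Lemma admits_iff (T : finType) (e : rel T) (n : nat) :
  admits_modular_sumset_labeling e n <-> #|T| <= (2 ^ n).-1.
Proof.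
split.
- move=> [f [finj fne]].
  rewrite -card_nonempty -(card_imset (mem T) finj).
  apply: subset_leq_card; apply/subsetP => _ /imsetP [x _ ->].
  by rewrite in_setC1 fne.
- move=> Hle.
  set S := [set~ (set0 : {set 'I_n})].
  have Hsz : #|T| <= size (enum S) by rewrite -cardE card_nonempty.
  exists (fun x => nth set0 (enum S) (enum_rank x)); split.
  + move=> x y /eqP; rewrite nth_uniq ?enum_uniq //.
    * by move/eqP/val_inj/enum_rank_inj.
    * exact: leq_trans (ltn_ord _) Hsz.
    * exact: leq_trans (ltn_ord _) Hsz.
  + move=> x.
    have : nth set0 (enum S) (enum_rank x) \in S.
      by rewrite -mem_enum; apply: mem_nth; exact: leq_trans (ltn_ord _) Hsz.
    by rewrite in_setC1.
Qed.

Theorem mainTheorem2 (T : finType) (e : rel T) :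
  simple_graph e -> no_isolated_vertices e ->
  is_modular_sumset_number e (1 + trunc_log 2 #|T|).
Proof.
move=> _ _; split => //; split.
- apply/admits_iff.
  have := trunc_log_ltn #|T| (isT : 1 < 2).
  rewrite add1n. case: (2 ^ _) => //.
- move=> n n0 /admits_iff Hle.
  case: (posnP #|T|) => [->|Tpos]; first by rewrite trunc_log0.
  rewrite add1n ltnNge; apply/negP => Hn.
  have H1 : 2 ^ n <= #|T|.
    apply: leq_trans (trunc_logP (isT : 1 < 2) Tpos).
    by rewrite leq_pexp2l.
  have : 2 ^ n <= (2 ^ n).-1 by exact: leq_trans H1 Hle.
  by rewrite leqNgt prednK ?expn_gt0 // leqnn.
Qed.
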